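(* Let $A\subset\mathbb N$ be a finite alphabet, $x\in A^{\mathbb N}$ any infinite word, and $w$ a finite word with $l(w)>\max A$. Let $\sigma_w$ be the substitution sending each $i\in A$ to the prefix of $w$ of length $l(w)-i$, and let $\int_w x=\sigma_w(x_0)\sigma_w(x_1)\sigma_w(x_2)\cdots$. If for every $n\in A$ the word $w$ is a prefix of $\sigma_w(n)\,w$, then $\int_w x$ is quasiperiodic with $w$ as a quasiperiod. In particular this holds whenever $A\subset\{0,\dots,k\}$ and $w=a^kba^k$ for letters $a\neq b$. *)

(* Defs.v *)
From mathcomp Require Import all_boot.
Set Implicit Arguments. Unset Strict Implicit. Unset Printing Implicit Defensive.

(* Infinite words over T are functions nat -> T; finite words are seq T. *)

Definition sigmaw {T : Type} (w : seq T) (i : nat) : seq T := take (size w - i) w.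

(* When every block is
   nonempty (i.e. x_k < size w), the first n+1 blocks have total length
   >= n+1, so position n is read inside this finite prefix and the default
   letter d is never used. *)
Definition intw {T : Type} (d : T) (w : seq T) (x : nat -> nat) (n : nat) : T :=
  nth d (flatten [seq sigmaw w (x k) | k <- iota 0 n.+1]) n.

Definition factor {T : Type} (y : nat -> T) (j m : nat) : seq T :=
  [seq y (j + k) | k <- iota 0 m].

Definition quasiperiod {T : eqType} (y : nat -> T) (q : seq T) : Prop :=
  forall i, exists j, j <= i < j + size q /\ factor y j (size q) = q.

(* Main.v *)
Require Import Defs.
From mathcomp Require Import all_boot.
From mathcomp Require Import zify.
Set Implicit Arguments.
Unset Strict Implicit.

Section Aux.
Variables (T : eqType) (d : T) (w : seq T) (x : nat -> nat).
Hypothesis xlt : forall n, x n < size w.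
Hypothesis pre : forall n, prefix w (sigmaw w (x n) ++ w).

Definition B k := sigmaw w (x k).
Definition F n := flatten [seq B k | k <- iota 0 n].
Definition P n := size (F n).

Lemma FS n : F n.+1 = F n ++ B n.
Proof. by rewrite /F -addn1 iotaD map_cat flatten_cat /= cats0 add0n. Qed.

Lemma sizeB k : size (B k) = size w - x k.
Proof. by rewrite /B /sigmaw size_takel // leq_subr. Qed.

Lemma sizeB_gt0 k : 0 < size (B k).
Proof. by rewrite sizeB subn_gt0. Qed.

Lemma PS n : P n.+1 = P n + size (B n).
Proof. by rewrite /P FS size_cat. Qed.

Lemma P_ge n : n <= P n.
Proof.
elim: n => [|n IH] //. rewrite PS. have := sizeB_gt0 n. lia.
Qed.

Lemma F_pref n m : n <= m -> exists s, F m = F n ++ s.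
Proof.
elim: m => [|m IH].
  by rewrite leqn0 => /eqP ->; exists [::]; rewrite cats0.
rewrite leq_eqVlt => /orP [/eqP ->| ]; first by exists [::]; rewrite cats0.
rewrite ltnS => /IH [s e]. by exists (s ++ B m); rewrite FS e catA.
Qed.

Lemma intwE n i : i < P n -> intw d w x i = nth d (F n) i.
Proof.
move=> hi.
have h1 : forall m, i < P m -> n <= m -> nth d (F m) i = nth d (F n) i.
  move=> m _ hnm. case: (F_pref hnm) => s ->. by rewrite nth_cat hi.
have hi1 : i < P i.+1 by have := P_ge i.+1.
rewrite /intw -/(F i.+1).
case: (leqP n i.+1) => h.
  by rewrite (h1 _ hi1 h).
have := F_pref (ltnW h). case=> s ->. by rewrite nth_cat hi1.
Qed.

Lemma occ j : j < size w -> forall k, intw d w x (P k + j) = nth d w j.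
Proof.
elim: j {-2}j (leqnn j) => [|J IH] j hj hw k.
- move: hj; rewrite leqn0 => /eqP ->. rewrite addn0.
  have h : P k < P k.+1 by rewrite PS; have := sizeB_gt0 k; lia.
  rewrite (intwE h) FS nth_cat ltnn subnn /B /sigmaw nth_take //.
  by rewrite subn_gt0.
- case: (ltnP j (size (B k))) => hjb.
  + have h : P k + j < P k.+1 by rewrite PS ltn_add2l.
    rewrite (intwE h) FS nth_cat ltnNge leq_addr /= addKn /B /sigmaw nth_take //.
    by move: hjb; rewrite sizeB.
  + have e : P k + j = P k.+1 + (j - size (B k)) by rewrite PS; lia.
    have hb := sizeB_gt0 k.
    rewrite e IH; [|lia|lia].
    have := pre k.
    move=> hp; have : w = take (size w) (sigmaw w (x k) ++ w).
      by move: hp; rewrite prefixE => /eqP.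
    move=> ew. rewrite [in RHS]ew nth_take // nth_cat -/(B k) ltnNge hjb //.
Qed.

Lemma locate i n : i < P n -> exists k, P k <= i < P k.+1.
Proof.
elim: n => [|n IH] //. case: (ltnP i (P n)) => h; first by move=> _; apply: IH.
by move=> h2; exists n; rewrite h h2.
Qed.

Lemma part1 : quasiperiod (intw d w x) w.
Proof.
move=> i. have hi : i < P i.+1 by have := P_ge i.+1.
case: (locate hi) => k /andP [h1 h2].
exists (P k); split.
  rewrite h1 /=. apply: (leq_trans h2). rewrite PS leq_add2l sizeB leq_subr //.
rewrite /factor -{3}(mkseq_nth d w) /mkseq. apply/eq_in_map => m.
rewrite mem_iota add0n => /andP [_ hm]. exact: occ.
Qed.
End Aux.

Theorem mainTheorem2 :
  (forall (T : eqType) (d : T) (A : seq nat) (w : seq T) (x : nat -> nat),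
     (forall n, x n \in A) ->
     (forall i, i \in A -> i < size w) ->
     (forall n, n \in A -> prefix w (sigmaw w n ++ w)) ->
     quasiperiod (intw d w x) w)
  /\
  (forall (T : eqType) (d : T) (A : seq nat) (k : nat) (a b : T) (x : nat -> nat),
     (forall i, i \in A -> i <= k) ->
     a != b ->
     (forall n, x n \in A) ->
     let w := nseq k a ++ b :: nseq k a in
     quasiperiod (intw d w x) w).
Proof.
have P1 : forall (T : eqType) (d : T) (A : seq nat) (w : seq T) (x : nat -> nat),
     (forall n, x n \in A) ->
     (forall i, i \in A -> i < size w) ->
     (forall n, n \in A -> prefix w (sigmaw w n ++ w)) ->
     quasiperiod (intw d w x) w.
  move=> T d A w x hx hA hp. apply: part1 => n; [exact: hA|exact: hp].
split => //.
move=> T d A k a b x hA _ hx w.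
apply: (P1 _ _ A) => // [i /hA hi|n /hA hn].
  rewrite /w size_cat /= !size_nseq. lia.
rewrite /sigmaw /w size_cat /= size_nseq.
have -> : k + (k.+1) - n = k + (k - n).+1 by lia.
rewrite take_cat size_nseq ltnNge leq_addr /= addKn /= take_nseq; last lia.
rewrite -catA /= catA -nseqD.
have -> : k - n + k = k + (k - n) by lia.
rewrite nseqD -catA -cat_cons catA. exact: prefix_prefix.
Qed.
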